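(* Let $X$ and $Y$ be Tychonoff spaces with $Y$ a $P$-space, and let $f:X\to Y$ be a meshing map which has a cross section. Then $f|_{N(X)}$ is a homeomorphism of $N(X)$ onto $N(Y)$.
   Context: A space $X$ is Menger if for each sequence $(\mathcal{U}_n)$ of open covers of $X$ there is a sequence $(\mathcal{V}_n)$ with each $\mathcal{V}_n$ a finite subset of $\mathcal{U}_n$ and $\bigcup_{n}\bigcup\mathcal{V}_n=X$. $X$ is locally Menger at $x$ if there are an open set $U$ and a Menger subspace $M$ of $X$ with $x\in U\subseteq M$; $N(X)$ denotes the set of points of $X$ at which $X$ is not locally Menger. A $P$-space is a space in which every countable intersection of open sets is open. A continuous surjection $f:X\to Y$ is a meshing map if there are compactifications $bX$ of $X$ and $cY$ of $Y$ and a continuous extension $\tilde f:bX\to cY$ of $f$ onto $cY$ such that $\tilde f|_{bX\setminus X}$ is a homeomorphism onto $cY\setminus Y$. A cross section of $f$ is a continuous map $g:Y\to X$ with $f\circ g=\mathrm{id}_Y$. *)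

(* Defs.v *)
From HB Require Import structures.
From mathcomp Require Import all_boot all_order all_algebra.
From mathcomp Require Import all_classical all_reals all_analysis.
From mathcomp Require Import Rstruct Rstruct_topology.
Set Implicit Arguments. Unset Strict Implicit. Unset Printing Implicit Defensive.
Local Open Scope classical_set_scope.

Definition tychonoff_space (T : topologicalType) : Prop :=
  accessible_space T /\
  forall (a : T) (B : set T), closed B -> ~ B a ->
    exists h : T -> Rdefinitions.R,
      continuous h /\ h a = 0%R /\ (forall b, B b -> h b = 1%R).

Definition homeo_on (S T : topologicalType) (A : set S) (B : set T)
    (f : S -> T) : Prop :=
  f @` A = B /\ {in A &, injective f} /\ {within A, continuous f} /\
  exists g : T -> S, g @` B `<=` A /\ (forall a, A a -> g (f a) = a) /\
    {within B, continuous g}.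

Definition compactification (X bX : topologicalType) (e : X -> bX) : Prop :=
  hausdorff_space bX /\ compact [set: bX] /\
  homeo_on [set: X] (range e) e /\ dense (range e).

Definition meshing (X Y : topologicalType) (f : X -> Y) : Prop :=
  continuous f /\ set_surj [set: X] [set: Y] f /\
  exists (bX cY : topologicalType) (eX : X -> bX) (eY : Y -> cY)
         (ft : bX -> cY),
    compactification eX /\ compactification eY /\
    continuous ft /\ (forall x, ft (eX x) = eY (f x)) /\
    set_surj [set: bX] [set: cY] ft /\
    homeo_on (~` range eX) (~` range eY) ft.

Definition cross_section (X Y : topologicalType) (f : X -> Y) (g : Y -> X)
  : Prop := continuous g /\ forall y, f (g y) = y.

Definition P_space (T : topologicalType) : Prop :=
  forall U : nat -> set T, (forall n, open (U n)) -> open (\bigcap_n U n).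

(* The subspace M of X is Menger (covers by open sets of X, which is
   equivalent to covers by relatively open sets of M). *)
Definition menger_subspace (T : topologicalType) (M : set T) : Prop :=
  forall U : nat -> set (set T),
    (forall n, (forall V, U n V -> open V) /\ M `<=` \bigcup_(V in U n) V) ->
    exists F : nat -> set (set T),
      (forall n, finite_set (F n) /\ F n `<=` U n) /\
      M `<=` \bigcup_n \bigcup_(V in F n) V.

Definition locally_menger_at (T : topologicalType) (x : T) : Prop :=
  exists (U M : set T), open U /\ menger_subspace M /\ U x /\ U `<=` M.

(* N(X): points at which X is not locally Menger. *)
Definition NLM (T : topologicalType) : set T := [set x | ~ locally_menger_at x].

(* Main.v *)
From HB Require Import structures.
Require Import Defs.
From mathcomp Require Import all_boot all_order all_algebra.
From mathcomp Require Import all_classical all_reals all_analysis.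
From mathcomp Require Import finmap.
Set Implicit Arguments. Unset Strict Implicit. Unset Printing Implicit Defensive.
Local Open Scope classical_set_scope.

Definition ptT (T : topologicalType) (x : T) : Type := T.
HB.instance Definition _ (T : topologicalType) (x : T) := Topological.copy (@ptT T x) T.
HB.instance Definition _ (T : topologicalType) (x : T) := isPointed.Build (@ptT T x) x.

Lemma compact_fin (T : topologicalType) (M : set T) (I : choiceType) (D : set I) (f : I -> set T) :
  compact M -> (forall i, D i -> open (f i)) -> M `<=` cover D f ->
  finite_subset_cover D f M.
Proof.
move=> cM oD cov.
have [->|/set0P [x Mx]] := eqVneq M set0.
  by exists fset0 => // ? [].
have cM' : @compact (@ptT T x) M := cM.
rewrite compact_cover in cM'.
exact: cM' I D f oD cov.
Qed.

Lemma compact_menger (T : topologicalType) (M : set T) :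
  compact M -> menger_subspace M.
Proof.
move=> cM U hU.
have [oU cov] := hU 0%N.
have [D' sD' cD'] := compact_fin cM oU (cov : M `<=` cover (U 0%N) id).
exists (fun n => if n is 0%N then [set` D'] else set0); split.
  case=> [|n]; split.
  - exact: finite_fset.
  - by move=> V /= VD; apply: set_mem (sD' V VD).
  - exact: finite_set0.
  - by [].
by move=> x /cD' [V VD Vx]; exists 0%N => //; exists V.
Qed.

Lemma menger_image (S T : topologicalType) (f : S -> T) (M : set S) :
  continuous f -> menger_subspace M -> menger_subspace (f @` M).
Proof.
move=> cf mM U hU.
pose W n := [set f @^-1` V | V in U n].
have hW : forall n, (forall V, W n V -> open V) /\ M `<=` \bigcup_(V in W n) V.
  move=> n; have [oU cU] := hU n; split.
    by move=> _ [V UV <-]; apply: (iffLR (continuousP f)) cf _ (oU V UV).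
  move=> x Mx; have [V UV Vfx] := cU (f x) (imageP f Mx).
  by exists (f @^-1` V) => //; exists V.
have [F [hF cF]] := mM W hW.
pose ch n (Z : set S) := xget (set0 : set _) [set V | U n V /\ f @^-1` V = Z].
have chP : forall n Z, F n Z -> U n (ch n Z) /\ f @^-1` (ch n Z) = Z.
  move=> n Z FZ; have [_ sF] := hF n; have [V UV eV] := sF Z FZ.
  rewrite /ch; apply: (@xgetPex _ _ [set V | U n V /\ f @^-1` V = Z]); by exists V.
exists (fun n => ch n @` F n); split.
  move=> n; have [finF sF] := hF n; split; first exact: finite_image.
  by move=> _ [Z FZ <-]; have [] := chP n Z FZ.
move=> _ [x Mx <-]; have [n _ [Z FZ Zx]] := cF x Mx.
exists n => //; exists (ch n Z); first by exists Z.
have [_ e] := chP n Z FZ; rewrite -e in Zx; exact: Zx.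
Qed.

Lemma menger_preimage (S T : topologicalType) (f : S -> T) (M : set T) :
  (forall y, compact (f @^-1` [set y])) ->
  (forall y (O : set S), open O -> f @^-1` [set y] `<=` O ->
     exists V, [/\ open V, V y & f @^-1` V `<=` O]) ->
  menger_subspace M -> menger_subspace (f @^-1` M).
Proof.
move=> cfib clf mM U hU.
pose P n (V : set T) (Phi : set (set S)) :=
  [/\ finite_set Phi, Phi `<=` U n & f @^-1` V `<=` \bigcup_(W in Phi) W].
pose good n (V : set T) := open V /\ exists Phi, P n V Phi.
have hG : forall n, (forall V, good n V -> open V) /\ M `<=` \bigcup_(V in good n) V.
  move=> n; have [oU cU] := hU n; split; first by move=> V [].
  move=> y My.
  have sub : f @^-1` [set y] `<=` cover (U n) id.
    by move=> x /= fxy; apply: cU; rewrite /= fxy.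
  have [D' sD' cD'] := compact_fin (cfib y) oU sub.
  have oO : open (\bigcup_(W in [set` D']) W).
    by apply: bigcup_open => W /= WD; apply: oU; apply: set_mem (sD' W WD).
  have [V [oV Vy sV]] := clf y _ oO cD'.
  exists V => //; split => //; exists [set` D']; split; [exact: finite_fset | by move=> W /= WD; apply: set_mem (sD' W WD) | by move=> x /sV].
have [F [hF cF]] := mM good hG.
pose Phi n V := xget (set0 : set _) (P n V).
have PhiP : forall n V, F n V -> P n V (Phi n V).
  move=> n V FV; have [_ sF] := hF n; have [_ ex] := sF V FV.
  rewrite /Phi; exact: (@xgetPex _ _ (P n V) ex).
exists (fun n => \bigcup_(V in F n) Phi n V); split.
  move=> n; have [finF sF] := hF n; split.
    by apply: bigcup_finite => // V FV; have [] := PhiP n V FV.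
  by move=> W [V FV PW]; have [_ + _] := PhiP n V FV; apply.
move=> x /= Mfx; have [n _ [V FV Vfx]] := cF (f x) Mfx.
have [_ _ sV] := PhiP n V FV.
have [W PW Wx] := sV x Vfx.
by exists n => //; exists W => //; exists V.
Qed.

Lemma pspace_compact_finite (Y : topologicalType) (C : set Y) :
  accessible_space Y -> P_space Y -> compact C -> finite_set C.
Proof.
move=> T1 PY cC; apply: contrapT => infC.
have [c0 Cc0] : C !=set0 := infinite_setN0 infC.
have : ([set: nat] #<= (C : set (@ptT Y c0)))%card by apply/infiniteP.
move=> /pcard_leP/injfunPex [s sfun sinj].
pose S m := s @` [set n | (m <= n)%N].
have clS : forall m, closed (S m).
  move=> m; rewrite -openC.
  have -> : ~` S m = \bigcap_n (if (m <= n)%N then ~` [set s n] else setT).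
    apply/seteqP; split.
      move=> z nS n _; case: (boolP (m <= n)%N) => mn /=; last by [].
      move=> zsn; apply: nS; exists n; [exact: mn | by rewrite zsn].
    move=> z H [n /= mn snz].
    by have := H n I; rewrite /= mn => /(_ (esym snz)).
  apply: PY => n; case: (m <= n)%N; last exact: openT.
  by rewrite openC; apply: accessible_closed_set1.
have cov : C `<=` cover [set: nat] (fun m => ~` S m).
  move=> z Cz; have [[n0 sn0]|nex] := pselect (exists n, s n = z).
    exists n0.+1 => // -[n /= le sn].
    have e : n0 = n by apply: sinj; rewrite ?in_setT // sn sn0.
    by move: le; rewrite e ltnn.
  by exists 0%N => // -[n _ sn]; apply: nex; exists n.
have [D' _ cD'] := compact_fin cC (fun m _ => closed_openC (clS m)) cov.
pose m0 := (\max_(i <- D') i)%N.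
have [i Di nSi] := cD' (s m0) (sfun m0 I).
apply: nSi; exists m0 => //=.
exact: leq_bigmax_seq.
Qed.

Lemma embed_inv (X bX : topologicalType) (e : X -> bX) :
  homeo_on [set: X] (range e) e ->
  [/\ injective e, continuous e &
      exists g0 : bX -> X, (forall x, g0 (e x) = x) /\ {within range e, continuous g0}].
Proof.
case=> _ [inj [ce [g0 [_ [g0e cg0]]]]]; split.
- by move=> a b; apply: inj; rewrite in_setT.
- exact/continuous_subspace_setT.
- by exists g0; split => // x; apply: g0e.
Qed.

Lemma embed_compact (X bX : topologicalType) (e : X -> bX) (K : set bX) :
  homeo_on [set: X] (range e) e -> compact K -> K `<=` range e ->
  compact (e @^-1` K).
Proof.
move=> /embed_inv [inj ce [g0 [g0e cg0]]] cK sK.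
have -> : e @^-1` K = g0 @` K.
  apply/seteqP; split.
    by move=> x Kex; exists (e x); rewrite ?g0e.
  by move=> _ [k Kk <-]; have [x _ ekx] := sK k Kk; rewrite /= -ekx g0e ekx.
exact: continuous_compact (continuous_subspaceW sK cg0) cK.
Qed.

Lemma embed_open (X bX : topologicalType) (e : X -> bX) (O : set X) :
  homeo_on [set: X] (range e) e -> open O ->
  exists2 O', open O' & e @^-1` O' = O.
Proof.
move=> /embed_inv [inj ce [g0 [g0e cg0]]] oO.
have := (iffLR (continuousP (g0 : subspace (range e) -> X))) cg0 O oO.
case/open_subspaceP => V oV eqV.
exists V => //; apply/seteqP; split => x /=.
  move=> Vex; have : (V `&` range e) (e x) by split => //; exists x.
  by rewrite eqV => -[/=]; rewrite g0e.
move=> Ox; have : ((g0 @^-1` O) `&` range e) (e x).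
  by split; [rewrite /= g0e | exists x].
by rewrite -eqV => -[].
Qed.

Lemma mesh_rem (X Y bX cY : topologicalType) (eX : X -> bX) (eY : Y -> cY)
  (ft : bX -> cY) :
  homeo_on (~` range eX) (~` range eY) ft ->
  forall c, range eY (ft c) -> range eX c.
Proof.
case=> img _ c rc; apply: contrapT => nc.
have : (ft @` (~` range eX)) (ft c) by exists c.
by rewrite img => /(_ rc).
Qed.

Lemma mesh_fiber (X Y bX cY : topologicalType) (f : X -> Y) (eX : X -> bX)
  (eY : Y -> cY) (ft : bX -> cY) :
  compactification eX -> compactification eY -> continuous ft ->
  (forall x, ft (eX x) = eY (f x)) ->
  homeo_on (~` range eX) (~` range eY) ft ->
  forall y, compact (f @^-1` [set y]).
Proof.
move=> [hbX [cbX [hX _]]] [hcY [ccY [hY _]]] cft comm hR y.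
have [injY _ _] := embed_inv hY.
have clK : closed (ft @^-1` [set eY y]).
  apply: (iffLR (continuous_closedP ft)) cft _ _.
  exact: (accessible_closed_set1 (hausdorff_accessible hcY)).
have cK : compact (ft @^-1` [set eY y]).
  exact: subclosed_compact clK cbX (subsetT _).
have sK : ft @^-1` [set eY y] `<=` range eX.
  by move=> c /= fc; apply: (mesh_rem hR); rewrite fc; exists y.
have -> : f @^-1` [set y] = eX @^-1` (ft @^-1` [set eY y]).
  apply/seteqP; split => x /=; rewrite comm; first by move->.
  by move/injY.
exact: embed_compact hX cK sK.
Qed.

Lemma mesh_closed (X Y bX cY : topologicalType) (f : X -> Y) (eX : X -> bX)
  (eY : Y -> cY) (ft : bX -> cY) :
  compactification eX -> compactification eY -> continuous ft ->
  (forall x, ft (eX x) = eY (f x)) ->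
  homeo_on (~` range eX) (~` range eY) ft ->
  forall y (O : set X), open O -> f @^-1` [set y] `<=` O ->
    exists V, [/\ open V, V y & f @^-1` V `<=` O].
Proof.
move=> [hbX [cbX [hX _]]] [hcY [ccY [hY _]]] cft comm hR y O oO sO.
have [injY ceY _] := embed_inv hY.
have [Op oOp eO] := embed_open hX oO.
have cC : compact (~` Op).
  by apply: subclosed_compact _ cbX (subsetT _); rewrite closedC.
have cI : compact (ft @` (~` Op)).
  by apply: continuous_compact cC; apply: continuous_subspaceT.
have clI := compact_closed hcY cI.
exists (eY @^-1` (~` (ft @` (~` Op)))); split.
- exact: (iffLR (continuousP eY)) ceY _ (closed_openC clI).
- move=> /= [c nc ce].
  have [x _ ex] : range eX c by apply: (mesh_rem hR); rewrite ce; exists y.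
  have Ox : O x by apply: sO; apply: injY; rewrite /= -comm ex.
  apply: nc; rewrite -ex; move: Ox; rewrite -eO; exact.
- move=> x /= nI; apply: contrapT => nOx; apply: nI; exists (eX x); last exact: comm.
  by move=> /= Opx; apply: nOx; rewrite -eO.
Qed.

Lemma mesh_offsec (X Y bX cY : topologicalType) (f : X -> Y) (eX : X -> bX)
  (eY : Y -> cY) (ft : bX -> cY) (g : Y -> X) :
  accessible_space Y -> P_space Y ->
  continuous f -> compactification eX -> compactification eY -> continuous ft ->
  (forall x, ft (eX x) = eY (f x)) ->
  homeo_on (~` range eX) (~` range eY) ft ->
  continuous g -> (forall y, f (g y) = y) ->
  forall x, g (f x) <> x -> locally_menger_at x.
Proof.
move=> T1 PY cf cpX cpY cft comm hR cg fg x gx.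
have fibc := mesh_fiber cpX cpY cft comm hR.
case: (cpX) => hbX [cbX [hX _]]; case: (cpY) => hcY [ccY [hY _]].
have [injX ceX _] := embed_inv hX.
have [injY ceY _] := embed_inv hY.
have pp0 : eX x != eX (g (f x)) by apply/eqP => /injX /esym.
have := hbX; rewrite open_hausdorff => /(_ _ _ pp0).
move=> [[A1 B1] [/= /set_mem pA1 /set_mem p0B1] [oA1 oB1 /eqP AB1]].
have reg : forall (q : bX) U, nbhs q U -> exists2 W, nbhs q W & closure W `<=` U.
  move=> q U qU.
  have := @compact_regular _ q setT hbX cbX filterT.
  move=> /(_ (nbhs_filter q)) => h; have := h U qU.
  by move=> [W qW sW]; exists W.
have [W1 nW1 cW1] := reg _ A1 (open_nbhs_nbhs (conj oA1 pA1)).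
have [W2 nW2 cW2] := reg _ B1 (open_nbhs_nbhs (conj oB1 p0B1)).
pose A := interior W1; pose B := interior W2.
have oA : open A := @open_interior _ W1.
have oB : open B := @open_interior _ W2.
have clAB : forall z, closure A z -> closure B z -> False.
  move=> z zA zB.
  have zA1 : A1 z by apply: cW1; apply: (closureS (@interior_subset _ W1)).
  have zB1 : B1 z by apply: cW2; apply: (closureS (@interior_subset _ W2)).
  have : (A1 `&` B1) z by split.
  by rewrite AB1.
have cK : forall Z : set bX, compact (ft @` closure Z).
  move=> Z.
  have cZ : compact (closure Z).
    by apply: (subclosed_compact _ cbX); [exact: closed_closure | exact: subsetT].
  by apply: (continuous_compact _ cZ); exact: continuous_subspaceT.
pose K := ft @` closure A `&` ft @` closure B.
have cKK : compact K by apply: compact_closedI (cK A) (compact_closed hcY (cK B)).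
have sK : K `<=` range eY.
  move=> z [[c1 c1A e1] [c2 c2B e2]]; apply: contrapT => nz.
  have r1 : (~` range eX) c1.
    by move=> [x1 _ ex1]; apply: nz; exists (f x1) => //; rewrite -comm ex1.
  have r2 : (~` range eX) c2.
    by move=> [x1 _ ex1]; apply: nz; exists (f x1) => //; rewrite -comm ex1.
  have e12 : c1 = c2.
    by case: hR => _ [inj _]; apply: inj; rewrite ?in_setE // e1 e2.
  by apply: (clAB c1) => //; rewrite e12.
have cC : compact (eY @^-1` K) := embed_compact hY cKK sK.
have finC := pspace_compact_finite T1 PY cC.
pose D := eY @^-1` K `\` [set f x].
have clD : closed D.
  apply: (iffLR accessible_finite_set_closed T1).
  exact: sub_finite_set (@subDsetl _ _ _) finC.
pose N := eX @^-1` A `&` (f @^-1` (g @^-1` (eX @^-1` B))) `&` f @^-1` (~` D).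
have oN : open N.
  apply: openI; first apply: openI.
  - exact: (iffLR (continuousP eX)) ceX _ oA.
  - apply: (iffLR (continuousP f)) cf _ _; apply: (iffLR (continuousP g)) cg _ _.
    exact: (iffLR (continuousP eX)) ceX _ oB.
  - exact: (iffLR (continuousP f)) cf _ (closed_openC clD).
have Nx : N x.
  split; first split.
  - exact: nW1.
  - exact: nW2.
  - by move=> [_ h]; apply: h.
have sN : N `<=` f @^-1` [set f x].
  move=> x' [[Ax' Bx'] nD]; apply: contrapT => ne; apply: nD; split => //.
  split.
  - by exists (eX x'); [apply: subset_closure | rewrite comm].
  - by exists (eX (g (f x'))); [apply: subset_closure | rewrite comm fg].
exists N, (f @^-1` [set f x]); split; first exact: oN.
split; first exact: compact_menger (fibc (f x)).
by split; [exact: Nx | exact: sN].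
Qed.

Theorem theorem5p17 (X Y : topologicalType) (f : X -> Y) :
  tychonoff_space X -> tychonoff_space Y -> P_space Y -> meshing f ->
  (exists g : Y -> X, cross_section f g) ->
  homeo_on (@NLM X) (@NLM Y) f.
Proof.
move=> _ [T1Y _] PY [cf [_ [bX [cY [eX [eY [ft [cpX [cpY [cft [comm [_ hR]]]]]]]]]]]].
move=> [g [cg fg]].
have fibc := mesh_fiber cpX cpY cft comm hR.
have clf := mesh_closed cpX cpY cft comm hR.
have sec : forall x, NLM x -> g (f x) = x.
  move=> x Nx; apply: contrapT => ne; apply: Nx.
  exact: (mesh_offsec T1Y PY cf cpX cpY cft comm hR cg fg ne).
have Nimg : forall y, NLM y -> NLM (g y).
  move=> y Ny [U [M [oU [mM [Ugy sUM]]]]]; apply: Ny.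
  exists (g @^-1` U), (f @` M); split; first exact: (iffLR (continuousP g)) cg _ oU.
  split; first exact: menger_image cf mM.
  split => // y' Uy'; exists (g y'); [exact: sUM | exact: fg].
have Npre : forall x, NLM x -> NLM (f x).
  move=> x Nx [U [M [oU [mM [Ufx sUM]]]]]; apply: Nx.
  exists (f @^-1` U), (f @^-1` M); split; first exact: (iffLR (continuousP f)) cf _ oU.
  split; first exact: menger_preimage fibc clf mM.
  by split => // x' /sUM.
split.
  apply/seteqP; split; first by move=> _ [x Nx <-]; apply: Npre.
  by move=> y Ny; exists (g y); [apply: Nimg | apply: fg].
split.
  by move=> a b; rewrite !in_setE => Na Nb fab; rewrite -(sec a Na) -(sec b Nb) fab.
split; first exact: continuous_subspaceT.
exists g; split; first by move=> _ [y Ny <-]; apply: Nimg.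
by split; [exact: sec | exact: continuous_subspaceT].
Qed.
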